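(* In the category $\mathbf{Lens}$, the classes of all epimorphisms, regular epimorphisms, strong epimorphisms and extremal epimorphisms coincide.
   Context: A lens $F\colon \mathbf{A}\to\mathbf{B}$ between small categories consists of a functor $F\colon\mathbf{A}\to\mathbf{B}$ (the get functor) together with, for each object $A$ of $\mathbf{A}$, a function $\varphi_{F,A}$ from the set of morphisms of $\mathbf{B}$ with domain $FA$ to the set of morphisms of $\mathbf{A}$ with domain $A$, such that: $F(\varphi_{F,A}b)=b$; $\varphi_{F,A}(\mathrm{id}_{FA})=\mathrm{id}_A$; and $\varphi_{F,A}(b'\circ b)=\varphi_{F,A'}(b')\circ\varphi_{F,A}(b)$ whenever $b$ has domain $FA$, $A'$ is the codomain of $\varphi_{F,A}b$, and $b'$ has domain $FA'$. $\mathbf{Lens}$ is the category of small categories and lenses, with composite of $F\colon\mathbf{A}\to\mathbf{B}$, $G\colon\mathbf{B}\to\mathbf{C}$ having get functor $G\circ F$ and puts $\varphi_{G\circ F,A}(c)=\varphi_{F,A}(\varphi_{G,FA}(c))$. *)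

(* Defs.v *)
From Stdlib Require Import Eqdep.

Record Cat : Type := {
  Ob : Type;
  Hom : Ob -> Ob -> Type;
  idm : forall a, Hom a a;
  cmp : forall a b c, Hom b c -> Hom a b -> Hom a c;
  cmp_id_l : forall a b (f : Hom a b), cmp a b b (idm b) f = f;
  cmp_id_r : forall a b (f : Hom a b), cmp a a b f (idm a) = f;
  cmp_assoc : forall a b c d (f : Hom a b) (g : Hom b c) (h : Hom c d),
      cmp a c d h (cmp a b c g f) = cmp a b d (cmp b c d h g) f
}.
Arguments Hom {c0} _ _.
Arguments idm {c0} _.
Arguments cmp {c0 a b c} _ _.

(** A lens F : A -> B: a get functor (fo, fm) together with puts
    [put a b u] = φ_{F,a}(u) for u : F a -> b, returned as the dependent pair
    (codomain of φ_{F,a} u, φ_{F,a} u). *)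
Record Lens (A B : Cat) : Type := {
  fo : Ob A -> Ob B;
  fm : forall a a' : Ob A, Hom a a' -> Hom (fo a) (fo a');
  fm_id : forall a, fm a a (idm a) = idm (fo a);
  fm_cmp : forall a b c (f : Hom a b) (g : Hom b c),
      fm a c (cmp g f) = cmp (fm b c g) (fm a b f);
  put : forall (a : Ob A) (b : Ob B), Hom (fo a) b -> {a' : Ob A & Hom a a'};
  (* F (φ b) = b *)
  put_lift : forall a b (u : Hom (fo a) b),
      existT (fun y => Hom (fo a) y)
        (fo (projT1 (put a b u))) (fm a _ (projT2 (put a b u)))
      = existT (fun y => Hom (fo a) y) b u;
  put_id : forall a, put a (fo a) (idm (fo a)) = existT (fun y => Hom a y) a (idm a);
  (* φ_{A}(b' o b) = φ_{A'}(b') o φ_A(b), where A' is the codomain of φ_A(b)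
     (so b : F A -> F A') and b' has domain F A' *)
  put_cmp : forall a a' (u : Hom (fo a) (fo a')) (f : Hom a a'),
      put a (fo a') u = existT (fun y => Hom a y) a' f ->
      forall b (v : Hom (fo a') b),
        put a b (cmp v u)
        = existT (fun y => Hom a y) (projT1 (put a' b v))
                 (cmp (projT2 (put a' b v)) f)
}.
Arguments fo {A B} _ _.
Arguments fm {A B} _ {a a'} _.
Arguments put {A B} _ a {b} _.

Definition lid (A : Cat) : Lens A A.
Proof.
  refine {| fo := fun a => a;
            fm := fun a a' f => f;
            put := fun a b u => existT (fun y => Hom a y) b u |}.
  - reflexivity.
  - reflexivity.
  - reflexivity.
  - reflexivity.
  - intros a a' u f H b v. apply inj_pair2 in H. subst. reflexivity.
Defined.

(** Composite of F : A -> B and G : B -> C (diagrammatic order: [lcomp F G]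
    is G o F), with get functor G o F and puts φ_{GF,a}(c) = φ_{F,a}(φ_{G,Fa}(c)). *)
Definition lcomp {A B C : Cat} (F : Lens A B) (G : Lens B C) : Lens A C.
Proof.
  refine {| fo := fun a => fo G (fo F a);
            fm := fun a a' f => fm G (fm F f);
            put := fun a c w =>
              put F a (projT2 (put G (fo F a) w)) |}.
  - intros a. rewrite (fm_id _ _ F), (fm_id _ _ G). reflexivity.
  - intros a b c f g. rewrite (fm_cmp _ _ F), (fm_cmp _ _ G). reflexivity.
  - intros a c w.
    pose proof (put_lift _ _ F a _ (projT2 (put G (fo F a) w))) as LF.
    pose proof (f_equal (fun s : {y : Ob B & Hom (fo F a) y} =>
        existT (fun z => Hom (fo G (fo F a)) z) (fo G (projT1 s)) (fm G (projT2 s))) LF)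
      as LF'.
    simpl in LF'. rewrite LF'.
    exact (put_lift _ _ G (fo F a) c w).
  - intros a. simpl. rewrite (put_id _ _ G). simpl. exact (put_id _ _ F a).
  - intros a a' u f H c v. simpl in *.
    destruct (put G (fo F a) u) as [b1 g] eqn:EG. simpl in H.
    pose proof (put_lift _ _ F a b1 g) as LF. rewrite H in LF. simpl in LF.
    pose proof (projT1_eq LF) as e. simpl in e. subst b1.
    apply inj_pair2 in LF. subst g.
    rewrite (put_cmp _ _ G _ _ u _ EG c v).
    destruct (put G (fo F a') v) as [b2 w]. simpl.
    exact (put_cmp _ _ F a a' (fm F f) f H b2 w).
Defined.

Definition LensEpi {A B : Cat} (e : Lens A B) : Prop :=
  forall (C : Cat) (g h : Lens B C), lcomp e g = lcomp e h -> g = h.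

Definition LensMono {A B : Cat} (m : Lens A B) : Prop :=
  forall (C : Cat) (g h : Lens C A), lcomp g m = lcomp h m -> g = h.

Definition LensIso {A B : Cat} (m : Lens A B) : Prop :=
  exists m' : Lens B A, lcomp m m' = lid A /\ lcomp m' m = lid B.

Definition LensRegularEpi {A B : Cat} (e : Lens A B) : Prop :=
  exists (C : Cat) (f g : Lens C A),
    lcomp f e = lcomp g e /\
    forall (D : Cat) (h : Lens A D), lcomp f h = lcomp g h ->
      exists! k : Lens B D, lcomp e k = h.

Definition LensStrongEpi {A B : Cat} (e : Lens A B) : Prop :=
  LensEpi e /\
  forall (C D : Cat) (m : Lens C D) (u : Lens A C) (v : Lens B D),
    LensMono m -> lcomp u m = lcomp e v ->
    exists d : Lens B C, lcomp e d = u /\ lcomp d m = v.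

Definition LensExtremalEpi {A B : Cat} (e : Lens A B) : Prop :=
  LensEpi e /\
  forall (C : Cat) (g : Lens A C) (m : Lens C B),
    LensMono m -> lcomp g m = e -> LensIso m.

(* Main.v *)
Require Import Defs.
From Stdlib Require Import Eqdep ProofIrrelevance FunctionalExtensionality ClassicalEpsilon.

Definition arrB {X : Cat} {x y : Ob X} (f : Hom x y) : {x : Ob X & {y : Ob X & Hom x y}} :=
  existT _ x (existT _ y f).

Lemma arrB_inj {X : Cat} {x y : Ob X} (f g : Hom x y) : arrB f = arrB g -> f = g.
Proof. unfold arrB. intro H. apply inj_pair2 in H. apply inj_pair2 in H. exact H. Qed.

Lemma arrB_src {X : Cat} {x y x' y' : Ob X} (f : Hom x y) (g : Hom x' y') : arrB f = arrB g -> x = x'.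
Proof. intro H. exact (f_equal (@projT1 _ _) H). Qed.

Lemma arrB_tgt {X : Cat} {x y x' y' : Ob X} (f : Hom x y) (g : Hom x' y') : arrB f = arrB g -> y = y'.
Proof. intro H. exact (f_equal (fun s => projT1 (projT2 s)) H). Qed.

Lemma arr_out {X : Cat} {x y1 y2 : Ob X} (f1 : Hom x y1) (f2 : Hom x y2) :
  arrB f1 = arrB f2 -> existT (fun y => Hom x y) y1 f1 = existT _ y2 f2.
Proof. unfold arrB. intro H. apply inj_pair2 in H. exact H. Qed.

Lemma out_arr {X : Cat} {x y1 y2 : Ob X} (f1 : Hom x y1) (f2 : Hom x y2) :
  existT (fun y => Hom x y) y1 f1 = existT _ y2 f2 -> arrB f1 = arrB f2.
Proof. unfold arrB. intro H. exact (f_equal (existT _ x) H). Qed.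

Lemma arr_in {X : Cat} {x1 x2 y : Ob X} (f1 : Hom x1 y) (f2 : Hom x2 y) :
  arrB f1 = arrB f2 -> existT (fun x => Hom x y) x1 f1 = existT _ x2 f2.
Proof. intro H. pose proof (arrB_src _ _ H). subst x2.
  apply arrB_inj in H. subst. reflexivity. Qed.

Lemma in_arr {X : Cat} {x1 x2 y : Ob X} (f1 : Hom x1 y) (f2 : Hom x2 y) :
  existT (fun x => Hom x y) x1 f1 = existT _ x2 f2 -> arrB f1 = arrB f2.
Proof. intro H. pose proof (f_equal (@projT1 _ _) H) as E. simpl in E. subst x2.
  apply inj_pair2 in H. subst. reflexivity. Qed.

Lemma arrB_id {X : Cat} (x y : Ob X) : x = y -> arrB (idm x) = arrB (idm y).
Proof. intros ->. reflexivity. Qed.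

Lemma arrB_cmp {X : Cat} {a b c a' b' c' : Ob X} (f1 : Hom a b) (g1 : Hom b c)
  (f2 : Hom a' b') (g2 : Hom b' c') :
  arrB f1 = arrB f2 -> arrB g1 = arrB g2 -> arrB (cmp g1 f1) = arrB (cmp g2 f2).
Proof. intros H1 H2. pose proof (arrB_src _ _ H1). pose proof (arrB_tgt _ _ H1).
  pose proof (arrB_tgt _ _ H2). subst. apply arrB_inj in H1. apply arrB_inj in H2.
  subst. reflexivity. Qed.

Definition castS {X : Cat} {x x' y : Ob X} (p : x = x') (f : Hom x y) : Hom x' y :=
  match p in _ = z return Hom z y with eq_refl => f end.
Definition castT {X : Cat} {x y y' : Ob X} (p : y = y') (f : Hom x y) : Hom x y' :=
  match p in _ = z return Hom x z with eq_refl => f end.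
Lemma arrB_castS {X : Cat} {x x' y : Ob X} (p : x = x') (f : Hom x y) : arrB (castS p f) = arrB f.
Proof. destruct p. reflexivity. Qed.
Lemma arrB_castT {X : Cat} {x y y' : Ob X} (p : y = y') (f : Hom x y) : arrB (castT p f) = arrB f.
Proof. destruct p. reflexivity. Qed.

Lemma put_ext {A B : Cat} (L : Lens A B) a {b1 b2} (u1 : Hom (fo L a) b1) (u2 : Hom (fo L a) b2) :
  arrB u1 = arrB u2 -> put L a u1 = put L a u2.
Proof. intro H. apply arr_out in H. pose proof (f_equal (@projT1 _ _) H) as E. simpl in E.
  subst b2. apply inj_pair2 in H. subst. reflexivity. Qed.

Lemma put_lift_arr {A B : Cat} (L : Lens A B) a {b} (u : Hom (fo L a) b) :
  arrB (fm L (projT2 (put L a u))) = arrB u.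
Proof. apply out_arr. apply put_lift. Qed.

Lemma put_lift_ob {A B : Cat} (L : Lens A B) a {b} (u : Hom (fo L a) b) :
  fo L (projT1 (put L a u)) = b.
Proof. exact (f_equal (@projT1 _ _) (put_lift _ _ L a b u)). Qed.

Lemma lens_eq_intro (A B : Cat) fo fm put p1 p2 p3 p4 p5 q1 q2 q3 q4 q5 :
  Build_Lens A B fo fm p1 p2 put p3 p4 p5 = Build_Lens A B fo fm q1 q2 put q3 q4 q5.
Proof.
  rewrite (proof_irrelevance _ p1 q1), (proof_irrelevance _ p2 q2),
    (proof_irrelevance _ p3 q3), (proof_irrelevance _ p4 q4), (proof_irrelevance _ p5 q5).
  reflexivity.
Qed.

Lemma lens_ext {A B : Cat} (L1 L2 : Lens A B)
  (Ho : forall a, fo L1 a = fo L2 a)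
  (Hm : forall a a' (f : Hom a a'), arrB (fm L1 f) = arrB (fm L2 f))
  (Hp : forall a c (u1 : Hom (fo L1 a) c) (u2 : Hom (fo L2 a) c),
      arrB u1 = arrB u2 -> put L1 a u1 = put L2 a u2) : L1 = L2.
Proof.
  destruct L1 as [fo1 fm1 fid1 fcmp1 put1 pl1 pid1 pc1],
           L2 as [fo2 fm2 fid2 fcmp2 put2 pl2 pid2 pc2]; simpl in *.
  assert (fo1 = fo2) by (extensionality a; apply Ho). subst fo2.
  assert (fm1 = fm2). { extensionality a; extensionality a'; extensionality f.
    apply arrB_inj. apply Hm. } subst fm2.
  assert (put1 = put2). { extensionality a; extensionality c; extensionality u.
    apply Hp. reflexivity. } subst put2.
  apply lens_eq_intro.
Qed.

Lemma lens_eq_fo {A B : Cat} (L1 L2 : Lens A B) a : L1 = L2 -> fo L1 a = fo L2 a.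
Proof. intros ->. reflexivity. Qed.
Lemma lens_eq_fm {A B : Cat} (L1 L2 : Lens A B) {a a'} (f : Hom a a') :
  L1 = L2 -> arrB (fm L1 f) = arrB (fm L2 f).
Proof. intros ->. reflexivity. Qed.
Lemma lens_eq_put {A B : Cat} (L1 L2 : Lens A B) a {c} (u1 : Hom (fo L1 a) c) (u2 : Hom (fo L2 a) c) :
  L1 = L2 -> arrB u1 = arrB u2 -> put L1 a u1 = put L2 a u2.
Proof. intros -> H. apply arrB_inj in H. subst. reflexivity. Qed.

Lemma lcomp_assoc {A B C D : Cat} (F : Lens A B) (G : Lens B C) (H : Lens C D) :
  lcomp (lcomp F G) H = lcomp F (lcomp G H).
Proof. destruct F, G, H. apply lens_eq_intro. Qed.

Lemma lcomp_id_l {A B : Cat} (F : Lens A B) : lcomp (lid A) F = F.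
Proof. apply lens_ext; try reflexivity.
  intros a c u1 u2 H. apply arrB_inj in H. subst. simpl. destruct (put F a u2). reflexivity. Qed.

Lemma lcomp_id_r {A B : Cat} (F : Lens A B) : lcomp F (lid B) = F.
Proof. destruct F. apply lens_eq_intro. Qed.

Lemma put_ext_arr {A B : Cat} (L : Lens A B) a {b1 b2} (u1 : Hom (fo L a) b1) (u2 : Hom (fo L a) b2) :
  arrB u1 = arrB u2 -> arrB (projT2 (put L a u1)) = arrB (projT2 (put L a u2)).
Proof. intro H. rewrite (put_ext L a u1 u2 H). reflexivity. Qed.

Lemma put_ext_arr' {A B C : Cat} (e : Lens A C) (L : Lens A B) a {b1 b2} (u1 : Hom (fo L a) b1) (u2 : Hom (fo L a) b2) :
  arrB u1 = arrB u2 -> arrB (fm e (projT2 (put L a u1))) = arrB (fm e (projT2 (put L a u2))).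
Proof. intro H. rewrite (put_ext L a u1 u2 H). reflexivity. Qed.

Lemma reg_epi {A B : Cat} (e : Lens A B) : LensRegularEpi e -> LensEpi e.
Proof.
  intros [C [f [g [Hfg Hu]]]] D k1 k2 Hk.
  destruct (Hu D (lcomp e k1)) as [k [Hk0 Huniq]].
  { rewrite <- !lcomp_assoc, Hfg. reflexivity. }
  rewrite <- (Huniq k1 eq_refl). apply Huniq. symmetry. exact Hk.
Qed.

Lemma reg_strong {A B : Cat} (e : Lens A B) : LensRegularEpi e -> LensStrongEpi e.
Proof.
  intro R. split. { apply reg_epi; exact R. }
  destruct R as [X [f [g [Hfg Hu]]]].
  intros C D m u v Hm Hsq.
  destruct (Hu C u) as [d [Hd _]].
  { apply Hm. rewrite !lcomp_assoc, Hsq, <- !lcomp_assoc, Hfg. reflexivity. }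
  exists d. split; [exact Hd|].
  apply (reg_epi e (ex_intro _ X (ex_intro _ f (ex_intro _ g (conj Hfg Hu))))).
  rewrite <- lcomp_assoc, Hd. exact Hsq.
Qed.

Lemma strong_extremal {A B : Cat} (e : Lens A B) : LensStrongEpi e -> LensExtremalEpi e.
Proof.
  intros [He Hs]. split; [exact He|].
  intros C g m Hm Hgm.
  destruct (Hs C B m g (lid B) Hm) as [d [Hd1 Hd2]].
  { rewrite lcomp_id_r. exact Hgm. }
  exists d. split; [|exact Hd2].
  apply Hm. rewrite lcomp_assoc, Hd2, lcomp_id_r, lcomp_id_l. reflexivity.
Qed.

Definition InIm {A B : Cat} (e : Lens A B) (b : Ob B) : Prop := exists a, fo e a = b.

Lemma InIm_fwd {A B : Cat} (e : Lens A B) (b b' : Ob B) (f : Hom b b') :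
  InIm e b -> InIm e b'.
Proof. intros [a Ha]. subst b. exists (projT1 (put e a f)). apply put_lift_ob. Qed.

Definition GOb {A B : Cat} (e : Lens A B) : Type :=
  {p : Ob B * bool | snd p = true -> ~ InIm e (fst p)}.
Definition gox {A B : Cat} {e : Lens A B} (x : GOb e) : Ob B := fst (proj1_sig x).
Definition gtx {A B : Cat} {e : Lens A B} (x : GOb e) : bool := snd (proj1_sig x).
Definition GQ {A B : Cat} (e : Lens A B) (t : bool) (b' : Ob B) (t' : bool) : Prop :=
  (t' = false -> t = false \/ InIm e b') /\ (t' = true -> t = true).
Definition GHom {A B : Cat} {e : Lens A B} (x y : GOb e) : Type :=
  {f : Hom (gox x) (gox y) | GQ e (gtx x) (gox y) (gtx y)}.

Lemma GQ_id {A B : Cat} (e : Lens A B) t b : GQ e t b t.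
Proof. split; intro H; [left|]; exact H. Qed.

Lemma GQ_cmp {A B : Cat} (e : Lens A B) t b' t' b'' t'' (f : Hom b' b'') :
  GQ e t b' t' -> GQ e t' b'' t'' -> GQ e t b'' t''.
Proof.
  intros [H1 H2] [K1 K2]. split.
  - intro E. destruct t'.
    + destruct (K1 E) as [F|F]; [discriminate|right; exact F].
    + destruct (H1 eq_refl) as [F|F]; [left; exact F|right; exact (InIm_fwd e _ _ f F)].
  - intro E. apply H2, K2, E.
Qed.

Definition GidH {A B : Cat} {e : Lens A B} (x : GOb e) : GHom x x :=
  exist _ (idm (gox x)) (GQ_id e _ _).
Definition GcmpH {A B : Cat} {e : Lens A B} {x y z : GOb e} (g : GHom y z) (f : GHom x y) : GHom x z :=
  exist _ (cmp (proj1_sig g) (proj1_sig f))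
    (GQ_cmp e _ _ _ _ _ (proj1_sig g) (proj2_sig f) (proj2_sig g)).

Lemma GHom_eq {A B : Cat} {e : Lens A B} {x y : GOb e} (f g : GHom x y) :
  proj1_sig f = proj1_sig g -> f = g.
Proof. destruct f, g; simpl; intros ->. f_equal. apply proof_irrelevance. Qed.

Definition GCat {A B : Cat} (e : Lens A B) : Cat.
Proof.
  refine {| Ob := GOb e; Hom := GHom; idm := GidH; cmp := @GcmpH _ _ e |}.
  - intros. apply GHom_eq. apply cmp_id_l.
  - intros. apply GHom_eq. apply cmp_id_r.
  - intros. apply GHom_eq. apply cmp_assoc.
Defined.

Definition gobj {A B : Cat} (e : Lens A B) (tg : Ob B -> bool)
  (tgP : forall b, tg b = true -> ~ InIm e b) (b : Ob B) : Ob (GCat e) :=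
  exist _ (b, tg b) (tgP b).

Lemma G_out_eq {A B : Cat} {e : Lens A B} (x y1 y2 : GOb e) (u1 : GHom x y1) (u2 : GHom x y2) :
  proj1_sig y1 = proj1_sig y2 -> arrB (proj1_sig u1) = arrB (proj1_sig u2) ->
  existT (fun y => @Hom (GCat e) x y) y1 u1 = existT _ y2 u2.
Proof.
  destruct y1 as [p1 h1], y2 as [p2 h2]; simpl; intros E. subst p2.
  rewrite (proof_irrelevance _ h1 h2). intro H. apply arrB_inj in H.
  assert (u1 = u2) by (apply GHom_eq; exact H). subst. reflexivity.
Qed.

Definition GLens {A B : Cat} (e : Lens A B) (tg : Ob B -> bool)
  (tgP : forall b, tg b = true -> ~ InIm e b)
  (Qo : forall b b' (f : Hom b b'), GQ e (tg b) b' (tg b'))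
  (Lo : forall b (y : GOb e) (u : GHom (gobj e tg tgP b) y), tg (gox y) = gtx y)
  : Lens B (GCat e).
Proof.
  refine {| fo := gobj e tg tgP;
            fm := fun b b' f => exist _ f (Qo b b' f) : GHom (gobj e tg tgP b) (gobj e tg tgP b');
            put := fun b y u => existT (fun b' => Hom b b') (gox y) (proj1_sig u) |}.
  - intros. apply GHom_eq. reflexivity.
  - intros. apply GHom_eq. reflexivity.
  - intros b y u. apply G_out_eq; [|reflexivity]. simpl.
    pose proof (Lo b y u) as L. unfold gox, gtx in *. destruct y as [[y1 y2] hy]. simpl in *.
    rewrite L. reflexivity.
  - intros. reflexivity.
  - intros a a' u f H b v. simpl in H. apply inj_pair2 in H. simpl. rewrite H. reflexivity.
Defined.

Definition tgh {A B : Cat} (e : Lens A B) (b : Ob B) : bool :=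
  if excluded_middle_informative (InIm e b) then false else true.

Lemma tghP {A B : Cat} (e : Lens A B) b : tgh e b = true -> ~ InIm e b.
Proof. unfold tgh. destruct (excluded_middle_informative (InIm e b)); [discriminate|auto]. Qed.
Lemma tgfP {A B : Cat} (e : Lens A B) (b : Ob B) : false = true -> ~ InIm e b.
Proof. discriminate. Qed.

Lemma tgh_Qo {A B : Cat} (e : Lens A B) b b' (f : Hom b b') : GQ e (tgh e b) b' (tgh e b').
Proof.
  unfold tgh. destruct (excluded_middle_informative (InIm e b)) as [I1|I1];
  destruct (excluded_middle_informative (InIm e b')) as [I2|I2].
  - apply GQ_id.
  - exfalso. exact (I2 (InIm_fwd e _ _ f I1)).
  - split; [intros _; right; exact I2 | discriminate].
  - apply GQ_id.
Qed.

Lemma tgh_Lo {A B : Cat} (e : Lens A B) b (y : GOb e) (u : GHom (gobj e (tgh e) (tghP e) b) y) :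
  tgh e (gox y) = gtx y.
Proof.
  destruct u as [f [q1 q2]]. destruct y as [[y1 y2] hy]. unfold gox, gtx in *; simpl in *.
  destruct y2.
  - unfold tgh. destruct (excluded_middle_informative (InIm e y1)); [|reflexivity].
    exfalso. exact (hy eq_refl i).
  - destruct (q1 eq_refl) as [F|F].
    + unfold tgh in F |- *. destruct (excluded_middle_informative (InIm e b)); [|discriminate].
      destruct (excluded_middle_informative (InIm e y1)); [reflexivity|].
      exfalso. exact (n (InIm_fwd e _ _ f i)).
    + unfold tgh. destruct (excluded_middle_informative (InIm e y1)); [reflexivity|tauto].
Qed.

Lemma tgf_Qo {A B : Cat} (e : Lens A B) b b' (f : Hom b b') : GQ e false b' false.
Proof. apply GQ_id. Qed.

Lemma tgf_Lo {A B : Cat} (e : Lens A B) b (y : GOb e) (u : GHom (gobj e (fun _ => false) (tgfP e) b) y) :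
  false = gtx y.
Proof.
  destruct u as [f [q1 q2]]. simpl in q2. destruct (gtx y); [|reflexivity].
  exact (q2 eq_refl).
Qed.

Lemma G_arr_eq {A B : Cat} {e : Lens A B} (x1 x2 y1 y2 : GOb e) (u1 : GHom x1 y1) (u2 : GHom x2 y2) :
  x1 = x2 -> y1 = y2 -> arrB (proj1_sig u1) = arrB (proj1_sig u2) ->
  @arrB (GCat e) _ _ u1 = @arrB (GCat e) _ _ u2.
Proof. intros -> -> H. apply arrB_inj in H. apply GHom_eq in H. subst. reflexivity. Qed.

Lemma G_arr_proj {A B : Cat} {e : Lens A B} (x1 x2 y1 y2 : GOb e) (u1 : GHom x1 y1) (u2 : GHom x2 y2) :
  @arrB (GCat e) _ _ u1 = @arrB (GCat e) _ _ u2 -> arrB (proj1_sig u1) = arrB (proj1_sig u2).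
Proof. intro H. exact (f_equal (fun s : {x : GOb e & {y : GOb e & GHom x y}} =>
   arrB (proj1_sig (projT2 (projT2 s)))) H). Qed.

Lemma epi_surj {A B : Cat} (e : Lens A B) : LensEpi e -> forall b, InIm e b.
Proof.
  intros He b0.
  pose (g := GLens e (fun _ => false) (tgfP e) (tgf_Qo e) (tgf_Lo e)).
  pose (h := GLens e (tgh e) (tghP e) (tgh_Qo e) (tgh_Lo e)).
  assert (Ho : forall b, InIm e b -> fo g b = fo h b).
  { intros b Ib. simpl. unfold gobj. apply ProofIrrelevanceTheory.subset_eq_compat.
    unfold tgh. destruct (excluded_middle_informative (InIm e b)); [reflexivity|tauto]. }
  assert (E : g = h).
  { apply He. apply lens_ext.
    - intro a. apply Ho. exists a. reflexivity.
    - intros a a' f. apply G_arr_eq; [apply Ho; exists a; reflexivity|apply Ho; exists a'; reflexivity|].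
      reflexivity.
    - intros a c u1 u2 H. simpl. apply put_ext. apply G_arr_proj in H. exact H. }
  pose proof (f_equal (fun x : GOb e => gtx x) (lens_eq_fo g h b0 E)) as F.
  simpl in F. unfold gtx, tgh in F. simpl in F.
  destruct (excluded_middle_informative (InIm e b0)); [assumption|discriminate].
Qed.

Lemma sig_eta {T : Type} {P : T -> Type} (s : {x : T & P x}) : existT P (projT1 s) (projT2 s) = s.
Proof. destruct s; reflexivity. Qed.

Definition KOb {A B : Cat} (e : Lens A B) : Type :=
  {p : Ob A * Ob A | fo e (fst p) = fo e (snd p)}.
Definition k1 {A B : Cat} {e : Lens A B} (x : KOb e) : Ob A := fst (proj1_sig x).
Definition k2 {A B : Cat} {e : Lens A B} (x : KOb e) : Ob A := snd (proj1_sig x).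
Definition kp {A B : Cat} {e : Lens A B} (x : KOb e) : fo e (k1 x) = fo e (k2 x) := proj2_sig x.
Definition KHom {A B : Cat} {e : Lens A B} (x y : KOb e) : Type :=
  {m : Hom (k1 x) (k1 y) * Hom (k2 x) (k2 y) | arrB (fm e (fst m)) = arrB (fm e (snd m))}.

Lemma Kid_pf {A B : Cat} {e : Lens A B} (x : KOb e) :
  arrB (fm e (fst (idm (k1 x), idm (k2 x)))) = arrB (fm e (snd (idm (k1 x), idm (k2 x)))).
Proof. simpl. rewrite !fm_id. apply arrB_id. exact (kp x). Qed.
Definition Kid {A B : Cat} {e : Lens A B} (x : KOb e) : KHom x x := exist _ _ (Kid_pf x).

Lemma Kcmp_pf {A B : Cat} {e : Lens A B} {x y z : KOb e} (g : KHom y z) (f : KHom x y) :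
  arrB (fm e (fst (cmp (fst (proj1_sig g)) (fst (proj1_sig f)), cmp (snd (proj1_sig g)) (snd (proj1_sig f)))))
  = arrB (fm e (snd (cmp (fst (proj1_sig g)) (fst (proj1_sig f)), cmp (snd (proj1_sig g)) (snd (proj1_sig f))))).
Proof. simpl. rewrite !fm_cmp. apply arrB_cmp; [exact (proj2_sig f)|exact (proj2_sig g)]. Qed.
Definition Kcmp {A B : Cat} {e : Lens A B} {x y z : KOb e} (g : KHom y z) (f : KHom x y) : KHom x z :=
  exist _ _ (Kcmp_pf g f).

Lemma KHom_eq {A B : Cat} {e : Lens A B} {x y : KOb e} (f g : KHom x y) :
  proj1_sig f = proj1_sig g -> f = g.
Proof. destruct f, g; simpl; intros ->. f_equal. apply proof_irrelevance. Qed.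

Definition KCat {A B : Cat} (e : Lens A B) : Cat.
Proof.
  refine {| Ob := KOb e; Hom := KHom; idm := Kid; cmp := @Kcmp _ _ e |}.
  - intros. apply KHom_eq. simpl. rewrite !cmp_id_l. destruct (proj1_sig f); reflexivity.
  - intros. apply KHom_eq. simpl. rewrite !cmp_id_r. destruct (proj1_sig f); reflexivity.
  - intros. apply KHom_eq. simpl. rewrite !cmp_assoc. reflexivity.
Defined.

Lemma K_out_eq {A B : Cat} {e : Lens A B} (x y1 y2 : KOb e) (m1 : KHom x y1) (m2 : KHom x y2) :
  arrB (fst (proj1_sig m1)) = arrB (fst (proj1_sig m2)) ->
  arrB (snd (proj1_sig m1)) = arrB (snd (proj1_sig m2)) ->
  existT (fun y => @Hom (KCat e) x y) y1 m1 = existT _ y2 m2.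
Proof.
  destruct y1 as [[p q] h1], y2 as [[p' q'] h2].
  destruct m1 as [[f g] r1], m2 as [[f' g'] r2]; simpl; intros H1 H2.
  pose proof (arrB_tgt _ _ H1) as E1. pose proof (arrB_tgt _ _ H2) as E2.
  unfold k1, k2 in E1, E2. simpl in E1, E2. subst p' q'.
  rewrite (proof_irrelevance _ h1 h2) in *.
  apply arrB_inj in H1. apply arrB_inj in H2. subst f' g'.
  rewrite (proof_irrelevance _ r1 r2). reflexivity.
Qed.

Definition pi1_put {A B : Cat} (e : Lens A B) (x : KOb e) (a' : Ob A) (u : Hom (k1 x) a') :
  {y : KOb e & KHom x y} :=
  let ut := castS (kp x) (fm e u) in
  let ph := put e (k2 x) ut in
  existT (fun y : KOb e => KHom x y)
    (exist _ (a', projT1 ph) (eq_sym (put_lift_ob e _ ut)))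
    (exist _ (u, projT2 ph) (eq_trans (eq_sym (arrB_castS (kp x) (fm e u))) (eq_sym (put_lift_arr e _ ut)))).

Definition pi1 {A B : Cat} (e : Lens A B) : Lens (KCat e) A.
Proof.
  refine (@Build_Lens (KCat e) A (@k1 _ _ e) (fun x y m => fst (proj1_sig m)) _ _ (pi1_put e) _ _ _).
  - intros; reflexivity.
  - intros; reflexivity.
  - intros; reflexivity.
  - intros x. apply K_out_eq; [reflexivity|]. simpl.
    etransitivity; [apply (put_ext_arr e (k2 x) _ (idm (fo e (k2 x))))|].
    { rewrite arrB_castS, fm_id. apply arrB_id. exact (kp x). }
    rewrite put_id. reflexivity.
  - intros x y u f H b v.
    assert (H1 : arrB u = arrB (fst (proj1_sig f))).
    { exact (f_equal (fun s : {y : KOb e & KHom x y} => arrB (fst (proj1_sig (projT2 s)))) H). }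
    pose (ut := castT (kp y) (castS (kp x) (fm e u))).
    assert (H' : put e (k2 x) ut = existT _ (k2 y) (snd (proj1_sig f))).
    { pose proof (f_equal (fun s : {y : KOb e & KHom x y} =>
         existT (fun z => Hom (k2 x) z) (k2 (projT1 s)) (snd (proj1_sig (projT2 s)))) H) as H2.
      unfold k2 in H2; simpl in H2. rewrite sig_eta in H2. etransitivity; [|exact H2]. apply put_ext.
      unfold ut. rewrite arrB_castT. reflexivity. }
    pose proof (put_cmp _ _ e (k2 x) (k2 y) ut (snd (proj1_sig f)) H' (fo e b) (castS (kp y) (fm e v))) as PC.
    apply K_out_eq; simpl.
    + apply arrB_cmp; [exact H1|reflexivity].
    + etransitivity; [apply (put_ext_arr e (k2 x) _ (cmp (castS (kp y) (fm e v)) ut))|].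
      2: rewrite PC; reflexivity. rewrite arrB_castS, fm_cmp. apply arrB_cmp.
      -- unfold ut. rewrite arrB_castT, arrB_castS. reflexivity.
      -- rewrite arrB_castS. reflexivity.
Defined.

Definition pi2_put {A B : Cat} (e : Lens A B) (x : KOb e) (a' : Ob A) (u : Hom (k2 x) a') :
  {y : KOb e & KHom x y} :=
  let ut := castS (eq_sym (kp x)) (fm e u) in
  let ph := put e (k1 x) ut in
  existT (fun y : KOb e => KHom x y)
    (exist _ (projT1 ph, a') (put_lift_ob e _ ut))
    (exist _ (projT2 ph, u) (eq_trans (put_lift_arr e _ ut) (arrB_castS (eq_sym (kp x)) (fm e u)))).

Definition pi2 {A B : Cat} (e : Lens A B) : Lens (KCat e) A.
Proof.
  refine (@Build_Lens (KCat e) A (@k2 _ _ e) (fun x y m => snd (proj1_sig m)) _ _ (pi2_put e) _ _ _).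
  - intros; reflexivity.
  - intros; reflexivity.
  - intros; reflexivity.
  - intros x. apply K_out_eq; [|reflexivity]. simpl.
    etransitivity; [apply (put_ext_arr e (k1 x) _ (idm (fo e (k1 x))))|].
    { rewrite arrB_castS, fm_id. apply arrB_id. symmetry. exact (kp x). }
    rewrite put_id. reflexivity.
  - intros x y u f H b v.
    assert (H1 : arrB u = arrB (snd (proj1_sig f))).
    { exact (f_equal (fun s : {y : KOb e & KHom x y} => arrB (snd (proj1_sig (projT2 s)))) H). }
    pose (ut := castT (eq_sym (kp y)) (castS (eq_sym (kp x)) (fm e u))).
    assert (H' : put e (k1 x) ut = existT _ (k1 y) (fst (proj1_sig f))).
    { pose proof (f_equal (fun s : {y : KOb e & KHom x y} =>
         existT (fun z => Hom (k1 x) z) (k1 (projT1 s)) (fst (proj1_sig (projT2 s)))) H) as H2.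
      unfold k1 in H2; simpl in H2. rewrite sig_eta in H2. etransitivity; [|exact H2]. apply put_ext.
      unfold ut. rewrite arrB_castT. reflexivity. }
    pose proof (put_cmp _ _ e (k1 x) (k1 y) ut (fst (proj1_sig f)) H' (fo e b) (castS (eq_sym (kp y)) (fm e v))) as PC.
    apply K_out_eq; simpl.
    + etransitivity; [apply (put_ext_arr e (k1 x) _ (cmp (castS (eq_sym (kp y)) (fm e v)) ut))|].
      2: rewrite PC; reflexivity. rewrite arrB_castS, fm_cmp. apply arrB_cmp.
      -- unfold ut. rewrite arrB_castT, arrB_castS. reflexivity.
      -- rewrite arrB_castS. reflexivity.
    + apply arrB_cmp; [exact H1|reflexivity].
Defined.

Lemma Kcomm {A B : Cat} (e : Lens A B) : lcomp (pi1 e) e = lcomp (pi2 e) e.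
Proof.
  apply lens_ext.
  - intro x. exact (kp x).
  - intros x y m. exact (proj2_sig m).
  - intros x c u1 u2 H. simpl. unfold pi1_put, pi2_put. apply K_out_eq; simpl.
    + apply put_ext_arr. rewrite arrB_castS, put_lift_arr. exact H.
    + apply put_ext_arr. rewrite arrB_castS, put_lift_arr. exact H.
Qed.

Lemma R1_of {A B D : Cat} (e : Lens A B) (h : Lens A D)
  (Hh : lcomp (pi1 e) h = lcomp (pi2 e) h) a1 a2 (p : fo e a1 = fo e a2) : fo h a1 = fo h a2.
Proof. exact (lens_eq_fo _ _ (exist _ (a1, a2) p : Ob (KCat e)) Hh). Qed.

Lemma R2_of {A B D : Cat} (e : Lens A B) (h : Lens A D)
  (Hh : lcomp (pi1 e) h = lcomp (pi2 e) h) a1 a1' a2 a2' (m1 : Hom a1 a1') (m2 : Hom a2 a2') :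
  arrB (fm e m1) = arrB (fm e m2) -> arrB (fm h m1) = arrB (fm h m2).
Proof.
  intro H.
  pose (x := exist _ (a1, a2) (arrB_src _ _ H) : Ob (KCat e)).
  pose (y := exist _ (a1', a2') (arrB_tgt _ _ H) : Ob (KCat e)).
  pose (mK := exist _ (m1, m2) H : @Hom (KCat e) x y).
  exact (lens_eq_fm _ _ mK Hh).
Qed.

Lemma R3_of {A B D : Cat} (e : Lens A B) (h : Lens A D)
  (Hh : lcomp (pi1 e) h = lcomp (pi2 e) h) a1 a2 (p : fo e a1 = fo e a2) c
  (d1 : Hom (fo h a1) c) (d2 : Hom (fo h a2) c) :
  arrB d1 = arrB d2 ->
  put h a1 d1 = put e a1 (castS (eq_sym p) (fm e (projT2 (put h a2 d2)))).
Proof.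
  intro H.
  pose (x := exist _ (a1, a2) p : Ob (KCat e)).
  pose proof (lens_eq_put (lcomp (pi1 e) h) (lcomp (pi2 e) h) x d1 d2 Hh H) as E.
  pose proof (f_equal (fun s : {y : KOb e & KHom x y} =>
     existT (fun z => Hom a1 z) (k1 (projT1 s)) (fst (proj1_sig (projT2 s)))) E) as F.
  simpl in F. unfold pi1_put, pi2_put, k1 in F. simpl in F.
  rewrite !sig_eta in F. exact F.
Qed.


Definition klift {A B : Cat} (e : Lens A B) (s : Ob B -> Ob A) (sP : forall b, fo e (s b) = b)
  {b b'} (u : Hom b b') : {a' : Ob A & Hom (s b) a'} :=
  put e (s b) (castS (eq_sym (sP b)) u).

Definition kob_eq {A B : Cat} (e : Lens A B) (s : Ob B -> Ob A) (sP : forall b, fo e (s b) = b)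
  {b b'} (u : Hom b b') : fo e (projT1 (klift e s sP u)) = fo e (s b') :=
  eq_trans (put_lift_ob e (s b) _) (eq_sym (sP b')).

Definition kfm {A B D : Cat} (e : Lens A B) (h : Lens A D) (Hh : lcomp (pi1 e) h = lcomp (pi2 e) h)
  (s : Ob B -> Ob A) (sP : forall b, fo e (s b) = b) {b b'} (u : Hom b b') :
  Hom (fo h (s b)) (fo h (s b')) :=
  castT (R1_of e h Hh _ _ (kob_eq e s sP u)) (fm h (projT2 (klift e s sP u))).

Lemma kfm_char {A B D : Cat} (e : Lens A B) (h : Lens A D) (Hh : lcomp (pi1 e) h = lcomp (pi2 e) h)
  (s : Ob B -> Ob A) (sP : forall b, fo e (s b) = b) {a a'} (f : Hom a a') {b b'} (u : Hom b b') :
  arrB (fm e f) = arrB u -> arrB (kfm e h Hh s sP u) = arrB (fm h f).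
Proof.
  intro H. unfold kfm. rewrite arrB_castT. apply (R2_of e h Hh).
  unfold klift. rewrite put_lift_arr, arrB_castS. symmetry. exact H.
Qed.

Definition kput {A B D : Cat} (e : Lens A B) (h : Lens A D)
  (s : Ob B -> Ob A) (sP : forall b, fo e (s b) = b) (b : Ob B) (c : Ob D)
  (d : Hom (fo h (s b)) c) : {b' : Ob B & Hom b b'} :=
  existT (fun b' => Hom b b') (fo e (projT1 (put h (s b) d)))
    (castS (sP b) (fm e (projT2 (put h (s b) d)))).

Definition klens {A B D : Cat} (e : Lens A B) (h : Lens A D) (Hh : lcomp (pi1 e) h = lcomp (pi2 e) h)
  (s : Ob B -> Ob A) (sP : forall b, fo e (s b) = b) : Lens B D.
Proof.
  refine (@Build_Lens B D (fun b => fo h (s b)) (fun b b' u => kfm e h Hh s sP u) _ _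
            (kput e h s sP) _ _ _).
  - intro b. apply arrB_inj.
    etransitivity; [apply (kfm_char e h Hh s sP (idm (s b)))|].
    + rewrite fm_id. apply arrB_id. apply sP.
    + rewrite fm_id. reflexivity.
  - intros b b' b'' u v. apply arrB_inj.
    pose (F1 := projT2 (klift e s sP u)).
    pose (pb := eq_sym (put_lift_ob e (s b) (castS (eq_sym (sP b)) u))).
    pose (F2 := projT2 (put e (projT1 (klift e s sP u)) (castS pb v))).
    etransitivity; [apply (kfm_char e h Hh s sP (cmp F2 F1))|].
    + rewrite fm_cmp. apply arrB_cmp.
      * unfold F1, klift. rewrite put_lift_arr, arrB_castS. reflexivity.
      * unfold F2. rewrite put_lift_arr, arrB_castS. reflexivity.
    + rewrite fm_cmp. apply arrB_cmp.
      * symmetry. unfold kfm. apply arrB_castT.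
      * symmetry. apply kfm_char. unfold F2. rewrite put_lift_arr, arrB_castS. reflexivity.
  - intros b c d. apply arr_out. unfold kput. simpl.
    etransitivity; [apply (kfm_char e h Hh s sP (projT2 (put h (s b) d)))|].
    + rewrite arrB_castS. reflexivity.
    + apply put_lift_arr.
  - intros b. apply arr_out. unfold kput. rewrite arrB_castS.
    etransitivity; [exact (f_equal (fun ps : {a' : Ob A & Hom (s b) a'} => arrB (fm e (projT2 ps)))
                            (put_id _ _ h (s b)))|].
    simpl. rewrite fm_id. apply arrB_id. apply sP.
  - intros b b' u f H c v.
    pose (ps := put h (s b) u).
    assert (E1 : fo e (projT1 ps) = b').
    { exact (f_equal (@projT1 _ _) H). }
    assert (Hf : arrB (fm e (projT2 ps)) = arrB f).
    { pose proof (out_arr _ _ H) as H0. rewrite arrB_castS in H0. exact H0. }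
    pose (p := eq_trans E1 (eq_sym (sP b'))).
    pose (E2 := R1_of e h Hh _ _ p).
    pose (u' := castT (eq_sym E2) u).
    pose (v' := castS (eq_sym E2) v).
    assert (H' : put h (s b) u' = existT _ (projT1 ps) (projT2 ps)).
    { rewrite sig_eta. apply put_ext. unfold u'. apply arrB_castT. }
    pose proof (put_cmp _ _ h (s b) (projT1 ps) u' (projT2 ps) H' c v') as PC.
    apply arr_out. unfold kput. simpl. rewrite arrB_castS.
    etransitivity; [apply (put_ext_arr' e h (s b) (cmp v u) (cmp v' u'))|].
    + apply arrB_cmp; [unfold u'; symmetry; apply arrB_castT|unfold v'; symmetry; apply arrB_castS].
    + rewrite PC. simpl. rewrite fm_cmp. apply arrB_cmp; [exact Hf|].
      rewrite arrB_castS.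
      rewrite (R3_of e h Hh (projT1 ps) (s b') p c v' v).
      * rewrite put_lift_arr, arrB_castS. reflexivity.
      * unfold v'. apply arrB_castS.
Defined.

Lemma k_fac {A B D : Cat} (e : Lens A B) (h : Lens A D) (Hh : lcomp (pi1 e) h = lcomp (pi2 e) h)
  (s : Ob B -> Ob A) (sP : forall b, fo e (s b) = b) : lcomp e (klens e h Hh s sP) = h.
Proof.
  apply lens_ext.
  - intro a. apply (R1_of e h Hh). apply sP.
  - intros a a' f. simpl. apply kfm_char. reflexivity.
  - intros a c u1 u2 H. simpl. unfold kput.
    rewrite (R3_of e h Hh a (s (fo e a)) (eq_sym (sP (fo e a))) c u2 u1 (eq_sym H)).
    apply put_ext. rewrite !arrB_castS. reflexivity.
Qed.

Lemma epi_reg {A B : Cat} (e : Lens A B) : LensEpi e -> LensRegularEpi e.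
Proof.
  intro He.
  pose (S := fun b => constructive_indefinite_description _ (epi_surj e He b)).
  pose (s := fun b => proj1_sig (S b)).
  assert (sP : forall b, fo e (s b) = b) by (intro b; exact (proj2_sig (S b))).
  exists (KCat e), (pi1 e), (pi2 e). split; [apply Kcomm|].
  intros D h Hh. exists (klens e h Hh s sP). split.
  - apply k_fac.
  - intros k' Hk'. apply He. rewrite Hk'. apply k_fac.
Qed.

Theorem corollary6p5 (A B : Cat) (e : Lens A B) :
  (LensEpi e <-> LensRegularEpi e) /\
  (LensEpi e <-> LensStrongEpi e) /\
  (LensEpi e <-> LensExtremalEpi e).
Proof.
  split; [|split]; split.
  - apply epi_reg.
  - apply reg_epi.
  - intro He. apply reg_strong, epi_reg, He.
  - intros [He _]. exact He.
  - intro He. apply strong_extremal, reg_strong, epi_reg, He.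
  - intros [He _]. exact He.
Qed.
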